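(* Let $n\ge1$, $m=2^n$, and let $\mathcal{B}$ be a nontrivial boolean algebra. The number of ordered pairs $(A_1,A_2)$ of subsets of $\{0,1\}^n$ such that the algebraic sets $V_{\mathcal{B}}(S_{A_1})$ and $V_{\mathcal{B}}(S_{A_2})$ are isomorphic equals $\binom{2m}{m}$. Hence the proportion of such pairs among all $4^m$ ordered pairs is $\binom{2m}{m}/4^m$, which is asymptotically equal to $\frac{1}{\sqrt{\pi m}}$ as $n\to\infty$.
   Context: Boolean algebras are in the language $\{\vee,\cdot,\bar{\ },0,1\}$. Orthogonal variables: $Z=\{z_\alpha:\alpha\in\{0,1\}^n\}$, $|Z|=m=2^n$. For $A\subseteq\{0,1\}^n$ the orthogonal system is $$S_A=\{z_\alpha=0\mid\alpha\in A\}\cup\{z_\alpha z_\beta=0\mid \alpha\ne\beta\}\cup\{\textstyle\bigvee_{\alpha}z_\alpha=1\},$$ and $V_{\mathcal{B}}(S)$ is its solution set over $\mathcal{B}$. For an algebraic set $Y$, $t\sim_Y s$ on terms iff $t(P)=s(P)$ for all $P\in Y$; the quotient is the coordinate algebra $\Gamma_{\mathcal{B}}(Y)$. Two algebraic sets are isomorphic if their coordinate algebras are isomorphic as boolean algebras. *)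

(* Defs.v *)
From HB Require Import structures.
From mathcomp Require Import all_boot all_order.
From Stdlib Require Import Reals.
Set Implicit Arguments. Unset Strict Implicit. Unset Printing Implicit Defensive.
Import Order.TTheory.
Local Open Scope order_scope.

Definition bvec (n : nat) := {ffun 'I_n -> bool}.

Inductive term (V : Type) : Type :=
  | TVar of V
  | TJoin of term V & term V
  | TMeet of term V & term V
  | TCompl of term V
  | TZero
  | TOne.
Arguments TZero {V}.
Arguments TOne {V}.

Section Eval.
Context {disp : Order.disp_t} (B : ctbDistrLatticeType disp) {V : Type}.

Fixpoint teval (P : V -> B) (t : term V) : B :=
  match t with
  | TVar v => P v
  | TJoin t1 t2 => teval P t1 `|` teval P t2
  | TMeet t1 t2 => teval P t1 `&` teval P t2
  | TCompl t1 => ~` teval P t1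
  | TZero => \bot
  | TOne => \top
  end.

Definition solset (S : term V * term V -> Prop) : (V -> B) -> Prop :=
  fun P => forall e, S e -> teval P e.1 = teval P e.2.

Definition tequiv (Y : (V -> B) -> Prop) (t s : term V) : Prop :=
  forall P, Y P -> teval P t = teval P s.

(* Isomorphism of the coordinate algebras Gamma_B(Y1) = term/~_Y1 and
   Gamma_B(Y2) = term/~_Y2, expressed without forming the quotients:
   a map of representatives F inducing a well-defined boolean-algebra
   homomorphism Gamma(Y1) -> Gamma(Y2), with a two-sided inverse induced by G. *)
Definition coord_iso (Y1 Y2 : (V -> B) -> Prop) : Prop :=
  exists (F G : term V -> term V),
    (forall t s, tequiv Y1 t s -> tequiv Y2 (F t) (F s))
    /\ (forall t s, tequiv Y2 (F (TJoin t s)) (TJoin (F t) (F s)))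
    /\ (forall t s, tequiv Y2 (F (TMeet t s)) (TMeet (F t) (F s)))
    /\ (forall t, tequiv Y2 (F (TCompl t)) (TCompl (F t)))
    /\ tequiv Y2 (F TZero) TZero
    /\ tequiv Y2 (F TOne) TOne
    /\ (forall t s, tequiv Y2 t s -> tequiv Y1 (G t) (G s))
    /\ (forall t, tequiv Y1 (G (F t)) t)
    /\ (forall s, tequiv Y2 (F (G s)) s).
End Eval.

Definition bigjoin_term (V : finType) : term V :=
  foldr (fun a t => TJoin (TVar a) t) TZero (enum V).

Definition orth_sys (n : nat) (A : {set bvec n}) : term (bvec n) * term (bvec n) -> Prop :=
  fun e =>
    (exists a, a \in A /\ e = (TVar a, TZero))
    \/ (exists a b, a != b /\ e = (TMeet (TVar a) (TVar b), TZero))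
    \/ e = (bigjoin_term (bvec n), TOne).

Definition VS {disp : Order.disp_t} (B : ctbDistrLatticeType disp) (n : nat)
  (A : {set bvec n}) : (bvec n -> B) -> Prop :=
  @solset disp B (bvec n) (orth_sys A).

Definition asym_ratio (n : nat) : R :=
  (INR 'C(2 * 2 ^ n, 2 ^ n) / (4 ^ (2 ^ n)%nat) * sqrt (PI * INR (2 ^ n)))%R.
Arguments VS {disp} B {n} A.

(* Main.v *)
Require Import Defs.
From HB Require Import structures.
From mathcomp Require Import all_boot all_order zify.
Import Order.TTheory Order.CTheory.
Set Implicit Arguments. Unset Strict Implicit.

Section Alg.
Variable n : nat.
Local Notation T := (bvec n).
Variables (disp : Order.disp_t) (B : ctbDistrLatticeType disp).
Local Open Scope order_scope.

Definition jt (s : seq T) : term T := foldr (fun a t => TJoin (TVar a) t) TZero s.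

Fixpoint X (t : term T) : {set T} :=
  match t with
  | TVar a => [set a]
  | TJoin t1 t2 => X t1 :|: X t2
  | TMeet t1 t2 => X t1 :&: X t2
  | TCompl t1 => ~: X t1
  | TZero => set0
  | TOne => setT
  end.

Lemma X_jt s : X (jt s) = [set x | x \in s].
Proof.
elim: s => [|a s IH] /=; first by apply/setP=> x; rewrite !inE.
by rewrite IH; apply/setP=> x; rewrite !inE.
Qed.

Definition orth (P : T -> B) := forall a b, a != b -> P a `&` P b = \bot.

Lemma atom (P : T -> B) t a : orth P ->
  P a `&` teval P t = if a \in X t then P a else \bot.
Proof.
move=> hP; elim: t => [b|t1 IH1 t2 IH2|t1 IH1 t2 IH2|t1 IH1| |] /=.
- rewrite inE; case: eqP => [->|/eqP ne]; first by rewrite meetxx.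
  exact: hP.
- rewrite meetUr IH1 IH2 inE; case: (a \in X t1); case: (a \in X t2) => /=;
    by rewrite ?joinxx ?joinx0 ?join0x.
- have -> : P a `&` (teval P t1 `&` teval P t2) =
     (P a `&` teval P t1) `&` (P a `&` teval P t2).
    by rewrite meetACA meetxx.
  rewrite IH1 IH2 inE; case: (a \in X t1); case: (a \in X t2) => /=;
    by rewrite ?meetxx ?meetx0 ?meet0x.
- rewrite inE; case h: (a \in X t1) IH1 => /= IH1.
  + by rewrite -{1}IH1 -meetA meetxC meetx0.
  + have e : P a = (P a `&` teval P t1) `|` (P a `&` ~` teval P t1).
      by rewrite -meetUr joinxC meetx1.
    by rewrite IH1 join0x in e; rewrite -e.
- by rewrite inE meetx0.
- by rewrite inE meetx1.
Qed.

Lemma VSP (A : {set T}) (P : T -> B) :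
  VS B A P <-> [/\ forall a, a \in A -> P a = \bot, orth P &
                   teval P (jt (enum T)) = \top].
Proof.
split.
- move=> h; split.
  + by move=> a aA; apply: (h (TVar a, TZero)); left; exists a.
  + by move=> a b ab; apply: (h (TMeet (TVar a) (TVar b), TZero)); right; left; exists a, b.
  + by apply: (h (bigjoin_term T, TOne)); right; right.
- case=> h1 h2 h3 e [[a [aA ->]]|[[a [b [ab ->]]]|->]] /=; first exact: h1.
  + exact: h2.
  + exact: h3.
Qed.

Lemma meet_jt (P : T -> B) x y s : (forall a, a \in s -> x `&` P a = y `&` P a) ->
  x `&` teval P (jt s) = y `&` teval P (jt s).
Proof.
elim: s => [|a s IH] h /=; first by rewrite !meetx0.
rewrite !meetUr h ?mem_head // IH // => b bs; apply: h; rewrite inE bs orbT.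
by [].  
Qed.

Definition delta (x : T) : T -> B := fun b => if b == x then \top else \bot.

Lemma orth_delta x : orth (delta x).
Proof.
move=> a b ab; rewrite /delta; case: (a =P x) => [ea|_]; last by rewrite meet0x.
case: (b =P x) => [eb|_]; last by rewrite meetx0.
by rewrite ea eb eqxx in ab.
Qed.

Lemma delta_eval x t : teval (delta x) t = if x \in X t then \top else \bot.
Proof.
have := atom t x (orth_delta x); rewrite {1 3}/delta eqxx meet1x => ->.
by [].
Qed.

Lemma delta_VS (A : {set T}) x : x \notin A -> VS B A (delta x).
Proof.
move=> xA; apply/VSP; split.
- by move=> a aA; rewrite /delta; case: eqP => // e; rewrite -e aA in xA.
- exact: orth_delta.
- by rewrite delta_eval X_jt inE mem_enum.
Qed.

Lemma equiv_char (hB : (\bot : B) != \top) (A : {set T}) t s :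
  tequiv (VS B A) t s <-> X t :&: ~: A = X s :&: ~: A.
Proof.
split.
- move=> h; apply/setP => x; rewrite !inE.
  case xA: (x \in A); rewrite ?andbF // !andbT.
  have := h _ (delta_VS (negbT xA)); rewrite !delta_eval.
  case: (x \in X t); case: (x \in X s) => // e.
  + by rewrite e eqxx in hB.
  + by rewrite e eqxx in hB.
- move=> e P /VSP [h1 h2 h3].
  rewrite -(meetx1 (teval P t)) -(meetx1 (teval P s)) -h3.
  apply: meet_jt => a _; rewrite ![_ `&` P a]meetC !atom //.
  case aA: (a \in A); first by rewrite h1 //; case: ifP; case: ifP.
  have := congr1 (fun S : {set T} => a \in S) e; rewrite /= !inE aA !andbT => ->.
  by [].
Qed.

Lemma X_enum (S : {set T}) : X (jt (enum S)) = S.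
Proof. by rewrite X_jt; apply/setP=> x; rewrite !inE mem_enum. Qed.

Lemma iso_le (hB : (\bot : B) != \top) (A1 A2 : {set T}) (F G : term T -> term T) :
  (forall t s, tequiv (VS B A2) t s -> tequiv (VS B A1) (G t) (G s)) ->
  (forall t, tequiv (VS B A1) (G (F t)) t) -> (#|~: A1| <= #|~: A2|)%N.
Proof.
move=> hG hGF.
pose phi (S : {set T}) := X (F (jt (enum S))) :&: ~: A2.
have inj : {in powerset (~: A1) &, injective phi}.
  move=> S1 S2; rewrite !inE => s1 s2 e.
  have e2 : tequiv (VS B A2) (F (jt (enum S1))) (F (jt (enum S2))).
    by apply/equiv_char.
  have e1 : tequiv (VS B A1) (jt (enum S1)) (jt (enum S2)).
    move=> P hP; rewrite -(hGF _ P hP) -(hGF (jt (enum S2)) P hP).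
    exact: hG e2 P hP.
  move/(equiv_char hB): e1; rewrite !X_enum.
  by rewrite (setIidPl s1) (setIidPl s2).
have : (#|phi @: powerset (~: A1)| <= #|powerset (~: A2)|)%N.
  apply: subset_leq_card; apply/subsetP => y /imsetP [S _ ->].
  by rewrite inE subsetIr.
by rewrite card_in_imset // !card_powerset leq_exp2l.
Qed.

Fixpoint rename (f : T -> T) (t : term T) : term T :=
  match t with
  | TVar a => TVar (f a)
  | TJoin t1 t2 => TJoin (rename f t1) (rename f t2)
  | TMeet t1 t2 => TMeet (rename f t1) (rename f t2)
  | TCompl t1 => TCompl (rename f t1)
  | TZero => TZero
  | TOne => TOne
  end.

Lemma teval_rename (P : T -> B) f t : teval P (rename f t) = teval (fun a => P (f a)) t.
Proof. by elim: t => //= [t1 -> t2 ->|t1 -> t2 ->|t1 ->]. Qed.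

Lemma teval_ext (P Q : T -> B) t : (forall a, P a = Q a) -> teval P t = teval Q t.
Proof. by move=> h; elim: t => /= [a|t1 -> t2 ->|t1 -> t2 ->|t1 ->||]. Qed.

Lemma rename_jt f s : rename f (jt s) = jt (map f s).
Proof. by elim: s => //= a s ->. Qed.

Lemma le_jt1 (P : T -> B) a s : a \in s -> P a <= teval P (jt s).
Proof.
elim: s => // b s IH; rewrite inE => /orP [/eqP ->|h] /=; first exact: leUl.
exact: le_trans (IH h) (leUr _ _).
Qed.

Lemma le_jt (P : T -> B) s s' : {subset s <= s'} -> teval P (jt s) <= teval P (jt s').
Proof.
elim: s => [|a s IH] h /=; first exact: le0x.
rewrite leUx le_jt1 ?h ?mem_head //= IH // => b bs; apply: h; rewrite inE bs orbT //.
Qed.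

Lemma pull (A1 A2 : {set T}) (f g : T -> T) (P : T -> B) :
  cancel g f -> injective f -> (forall a, a \in A1 -> f a \in A2) ->
  VS B A2 P -> VS B A1 (fun a => P (f a)).
Proof.
move=> gf finj fA /VSP [h1 h2 h3]; apply/VSP; split.
- by move=> a aA; apply: h1; apply: fA.
- by move=> a b ab; apply: h2; apply: contra ab => /eqP /finj ->.
- rewrite -teval_rename rename_jt; apply/eqP; rewrite -le1x -h3; apply: le_jt.
  by move=> y _; rewrite -(gf y); apply: map_f; rewrite mem_enum.
Qed.

Definition hmap (s1 s2 : seq T) (x : T) := nth x s2 (index x s1).

Lemma hmapP s1 s2 x : uniq s2 -> size s1 = size s2 -> x \in s1 ->
  hmap s1 s2 x \in s2 /\ index (hmap s1 s2 x) s2 = index x s1.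
Proof.
move=> u2 sz xs; have lt : (index x s1 < size s2)%N by rewrite -sz index_mem.
by split; [apply: mem_nth | apply: index_uniq].
Qed.

Lemma exists_bij (A1 A2 : {set T}) : #|A1| = #|A2| ->
  exists f g : T -> T, [/\ cancel f g, cancel g f,
     (forall a, a \in A1 -> f a \in A2) & (forall a, a \in A2 -> g a \in A1)].
Proof.
move=> e.
have e' : #|~: A1| = #|~: A2|.
  by apply/eqP; rewrite -(eqn_add2l #|A1|) cardsC e cardsC.
pose f x := if x \in A1 then hmap (enum A1) (enum A2) x
            else hmap (enum (~: A1)) (enum (~: A2)) x.
have P1 x : x \in A1 -> f x \in A2 /\ index (f x) (enum A2) = index x (enum A1).
  move=> xA; rewrite /f xA; have [h1 h2] := hmapP (enum_uniq A2) (etrans (esym (cardE _)) (etrans e (cardE _))) (etrans (mem_enum _ _) xA).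
  by rewrite -mem_enum.
have P2 x : x \notin A1 -> f x \notin A2 /\ index (f x) (enum (~: A2)) = index x (enum (~: A1)).
  move=> xA; rewrite /f (negbTE xA).
  have xA' : x \in enum (~: A1) by rewrite mem_enum inE.
  have [h1 h2] := hmapP (enum_uniq (~: A2)) (etrans (esym (cardE _)) (etrans e' (cardE _))) xA'.
  by move: h1; rewrite mem_enum inE.
have finj : injective f.
  move=> x y.
  case xA: (x \in A1); case yA: (y \in A1).
  - have [a1 a2] := P1 x xA; have [b1 b2] := P1 y yA => exy.
    rewrite exy b2 in a2; apply: (@index_inj _ x (enum A1) x y); rewrite ?mem_enum ?xA ?yA // a2.
  - have [a1 _] := P1 x xA; have [b1 _] := P2 y (negbT yA) => exy.
    by rewrite -exy a1 in b1.
  - have [a1 _] := P2 x (negbT xA); have [b1 _] := P1 y yA => exy.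
    by rewrite exy b1 in a1.
  - have [a1 a2] := P2 x (negbT xA); have [b1 b2] := P2 y (negbT yA) => exy.
    rewrite exy b2 in a2; apply: (@index_inj _ x (enum (~: A1)) x y); rewrite ?mem_enum ?inE ?xA ?yA // a2.
have [g fg gf] := injF_bij finj.
exists f, g; split => //; first by move=> a /P1 [].
move=> a aA.
case gA: (g a \in A1) => //.
have [b1 _] := P2 (g a) (negbT gA); by rewrite gf aA in b1.
Qed.

Lemma iso_of_card (A1 A2 : {set T}) : #|A1| = #|A2| -> coord_iso (VS B A1) (VS B A2).
Proof.
move=> /exists_bij [f [g [fg gf fA gA]]].
have finj : injective f by exact: can_inj fg.
have ginj : injective g by exact: can_inj gf.
exists (rename f), (rename g).
have p2 P : VS B A2 P -> VS B A1 (fun a => P (f a)) by move=> hP; exact: (pull gf finj fA hP).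
have p1 P : VS B A1 P -> VS B A2 (fun a => P (g a)) by move=> hP; exact: (pull fg ginj gA hP).
refine (conj _ (conj _ (conj _ (conj _ (conj _ (conj _ (conj _ (conj _ _)))))))); try by [].
- by move=> t s h P hP; rewrite !teval_rename; apply: h; apply: p2.
- by move=> t s h P hP; rewrite !teval_rename; apply: h; apply: p1.
- move=> t P hP; rewrite !teval_rename; apply: teval_ext => a; by rewrite fg.
- move=> t P hP; rewrite !teval_rename; apply: teval_ext => a; by rewrite gf.
Qed.

Lemma iso_iff (hB : (\bot : B) != \top) (A1 A2 : {set T}) :
  coord_iso (VS B A1) (VS B A2) <-> #|A1| = #|A2|.
Proof.
split; last exact: iso_of_card.
move=> [F [G [c1 [_ [_ [_ [_ [_ [c7 [c8 c9]]]]]]]]]].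
have l1 := iso_le hB c7 c8.
have l2 := iso_le hB c1 c9.
have e : #|~: A1| = #|~: A2| by apply/eqP; rewrite eqn_leq l1 l2.
by apply/eqP; rewrite -(eqn_add2r #|~: A1|) cardsC e cardsC.
Qed.
End Alg.

Lemma count_pairs (T : finType) :
  #|[set p : {set T} * {set T} | #|p.1| == #|p.2|]| = 'C(2 * #|T|, #|T|).
Proof.
set m := #|T|.
rewrite -sum1_card.
rewrite (partition_big (fun p : {set T} * {set T} => (inord #|p.1| : 'I_m.+1)) xpredT) //=.
transitivity (\sum_(j < m.+1) 'C(m, j) * 'C(m, m - j)).
  apply: eq_bigr => j _.
  rewrite bin_sub; last by rewrite -ltnS ltn_ord.
  rewrite -card_draws -cardsX -sum1_card; apply: eq_bigl => p.
  rewrite !inE.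
  have lt : (#|p.1| < m.+1)%N by rewrite ltnS max_card.
  apply/andP/andP => [[/eqP e /eqP <-]|[/eqP e1 /eqP e2]].
    by rewrite inordK // e !eqxx.
  split; first by rewrite e1 e2.
  by apply/eqP/val_inj; rewrite /= inordK // e1.
by rewrite Vandermonde mul2n addnn.
Qed.

Lemma card_pairs (T : finType) :
  #|{: {set T} * {set T}}| = 4 ^ #|T|.
Proof.
rewrite card_prod.
have -> : #|{: {set T}}| = 2 ^ #|T|.
  by rewrite -cardsT -(card_powerset [set: T]) powersetT cardsT.
by rewrite -expnMn.
Qed.

Lemma binS_id M : 'C(2 * M.+1, M.+1) * M.+1 * M.+1 = 'C(2 * M, M) * (2 * M).+1 * (2 * M).+2.
Proof.
have e1 : 2 * M.+1 = (2 * M).+2 by lia.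
have d1 := mul_bin_diag (2 * M).+2 M.
have d2 := mul_bin_diag (2 * M).+1 M.
have s1 : 'C((2 * M).+1, M.+1) = 'C((2 * M).+1, M).
  have e2 : (2 * M).+1 - M = M.+1 by lia.
  by rewrite -{1}e2 bin_sub //; lia.
rewrite /= in d1 d2.
rewrite e1.
move: d1 d2; rewrite s1.
set C2 := 'C(_.+2, _); set C1 := 'C(_.+1, M); set C0 := 'C(2 * M, M).
move=> d1 d2.
have -> : C2 * M.+1 * M.+1 = (M.+1 * C2) * M.+1 by rewrite mulnC mulnA.
rewrite -d1 -mulnA (mulnC C1) -d2.
by rewrite [RHS]mulnC (mulnC C0).
Qed.

Lemma expn_pow m k : expn m k = Nat.pow m k.
Proof. by elim: k => //= k IH; rewrite expnS IH multE. Qed.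

From Stdlib Require Import Reals.

Module Wallis.
From Stdlib Require Import Lra Lia.
From Coquelicot Require Import Coquelicot.
Local Open Scope R_scope.

Definition WI (n : nat) : R := RInt (fun x => sin x ^ n) 0 (PI/2).

Lemma cont_pow n x : continuous (fun x => sin x ^ n) x.
Proof.
apply continuity_pt_filterlim. apply derivable_continuous_pt. reg.
Qed.

Lemma ex_I n : ex_RInt (fun x => sin x ^ n) 0 (PI/2).
Proof.
apply: (@ex_RInt_continuous R_CompleteNormedModule) => x _. apply cont_pow.
Qed.

Lemma rec_deriv n x : is_derive (fun x => sin x ^ (S n) * cos x) x
   (INR (S n) * sin x ^ n - INR (S (S n)) * sin x ^ (S (S n))).
Proof.
auto_derive; [easy|].
have -> : (match n with | 0%nat => 1 | S _ => INR n + 1 end) = INR (S n).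
  by case: n.
have hc : cos x ^ 2 = 1 - sin x ^ 2 by have := sin2_cos2 x; rewrite /Rsqr /=; lra.
transitivity (INR (S n) * sin x ^ n * (cos x ^ 2) - sin x ^ (S (S n))).
  simpl; ring.
rewrite hc (S_INR (S n)) /=; ring.
Qed.

Lemma rec_I n : INR (S n) * WI n = INR (S (S n)) * WI (S (S n)).
Proof.
have H := @is_RInt_derive R_CompleteNormedModule (fun x => sin x ^ (S n) * cos x)
   (fun x => INR (S n) * sin x ^ n - INR (S (S n)) * sin x ^ (S (S n))) 0 (PI/2)
   (fun x _ => rec_deriv n x).
have H2 : forall x, Rmin 0 (PI / 2) <= x <= Rmax 0 (PI / 2) ->
   continuous (fun x => INR (S n) * sin x ^ n - INR (S (S n)) * sin x ^ (S (S n))) x.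
  move=> x _; apply continuity_pt_filterlim; apply derivable_continuous_pt; reg.
have {H H2} H := H H2.
have H1 := is_RInt_minus _ _ _ _ _ _ (is_RInt_scal _ _ _ (INR (S n)) _ (RInt_correct _ _ _ (ex_I n)))
             (is_RInt_scal _ _ _ (INR (S (S n))) _ (RInt_correct _ _ _ (ex_I (S (S n))))).
have key : INR (S n) * WI n - INR (S (S n)) * WI (S (S n)) = 0.
  transitivity (RInt (fun x => INR (S n) * sin x ^ n - INR (S (S n)) * sin x ^ (S (S n))) 0 (PI/2)).
    symmetry; exact (is_RInt_unique _ _ _ _ H1).
  rewrite (is_RInt_unique _ _ _ _ H) cos_PI2 sin_0.
  rewrite /minus /plus /opp /=; ring.
lra.
Qed.

Lemma I0 : WI 0 = PI / 2.
Proof. rewrite /WI /= RInt_const /scal /= /mult /=; ring. Qed.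

Lemma I1 : WI 1 = 1.
Proof.
have H := @is_RInt_derive R_CompleteNormedModule (fun x => - cos x)
   (fun x => sin x ^ 1) 0 (PI/2)
   (fun x _ => ltac:(auto_derive; [easy| simpl; ring])).
have H2 : forall x, Rmin 0 (PI / 2) <= x <= Rmax 0 (PI / 2) ->
   continuous (fun x => sin x ^ 1) x.
  by move=> x _; apply cont_pow.
have {H H2} H := H H2.
rewrite /WI (is_RInt_unique _ _ _ _ H) cos_PI2 cos_0 /minus /plus /opp /=; ring.
Qed.

Lemma I_mono n : WI (S n) <= WI n.
Proof.
have hP := PI_RGT_0.
apply RInt_le; [lra | apply ex_I | apply ex_I |].
move=> x hx.
have h1 : 0 <= sin x by apply sin_ge_0; lra.
have h2 : sin x <= 1 by have := SIN_bound x; lra.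
have h3 := pow_le _ n h1.
rewrite /=; nra.
Qed.

Lemma I_prod n : INR (S n) * WI (S n) * WI n = PI / 2.
Proof.
elim: n => [|n IH]; first by rewrite I0 I1 /=; ring.
rewrite -(rec_I n) -IH; ring.
Qed.

Section Closed.
Variable c : nat -> nat.
Hypothesis c0 : c 0%nat = 1%nat.
Hypothesis cS : forall M, INR (c (S M)) * (INR M + 1) * (INR M + 1) =
  INR (c M) * (2 * INR M + 1) * (2 * INR M + 2).

Definition a M := INR (c M) / 4 ^ M.

Lemma I_even M : WI ((Nat.mul 2 (M))) = PI / 2 * a M.
Proof.
elim: M => [|M IH]; first by rewrite /= I0 /a c0 /=; field.
have e : ((Nat.mul 2 (S M)) = S (S ((Nat.mul 2 (M)))))%nat by lia.
have r := rec_I ((Nat.mul 2 (M))).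
rewrite e.
have hM : 0 <= INR M by apply pos_INR.
have p4 : 0 < 4 ^ M by apply pow_lt; lra.
have hk : INR (S (S ((Nat.mul 2 (M))))) = 2 * INR M + 2 by rewrite !S_INR mult_INR /=; ring.
have hk' : INR (S ((Nat.mul 2 (M)))) = 2 * INR M + 1 by rewrite !S_INR mult_INR /=; ring.
rewrite hk hk' IH in r.
have -> : WI (S (S ((Nat.mul 2 (M))))) = (2 * INR M + 1) * (PI / 2 * a M) / (2 * INR M + 2).
  rewrite r; field; lra.
rewrite /a /=.
have hc' : INR (c (S M)) = INR (c M) * (2 * INR M + 1) * (2 * INR M + 2) / ((INR M + 1) * (INR M + 1)).
  rewrite -cS; field; lra.
rewrite hc'; field; lra.
Qed.

Lemma a_ge0 M : 0 <= a M.
Proof.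
rewrite /a; apply Rdiv_le_0_compat; [apply pos_INR | apply pow_lt; lra].
Qed.

Lemma bounds M : (1 <= M)%coq_nat ->
  2 * INR M / (2 * INR M + 1) <= a M ^ 2 * PI * INR M <= 1.
Proof.
move=> hM.
have hP := PI_RGT_0.
have hm : 1 <= INR M by apply (le_INR 1).
destruct M as [|K]; first lia.
set m := INR (S K).
have hm1 : 1 <= m by exact hm.
have ha := a_ge0 (S K).
have hb := I_even (S K).
set b := WI ((Nat.mul 2 (S K))) in hb.
have p1 := I_prod ((Nat.mul 2 (S K))).
have p2 := I_prod (S ((Nat.mul 2 (K)))).
have e : (S (S ((Nat.mul 2 (K)))) = (Nat.mul 2 (S K)))%nat by lia.
rewrite e in p2.
have m1 := I_mono ((Nat.mul 2 (S K))).
have m2 := I_mono (S ((Nat.mul 2 (K)))).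
rewrite e in m2.
fold b in p1, p2, m1, m2.
have i1 : INR (S ((Nat.mul 2 (S K)))) = 2 * m + 1 by rewrite S_INR mult_INR /m /=; ring.
have i2 : INR ((Nat.mul 2 (S K))) = 2 * m by rewrite mult_INR /m /=; ring.
rewrite i1 in p1; rewrite i2 in p2.
set c1 := WI (S ((Nat.mul 2 (S K)))) in p1 m1.
set d := WI (S ((Nat.mul 2 (K)))) in p2 m2.
have hb0 : 0 <= b by rewrite hb; nra.
have u : b * b * (2 * m) <= PI / 2.
  have : 0 <= b * (2 * m) * (d - b).
  apply Rmult_le_pos; [apply Rmult_le_pos; lra | lra].
  nra.
have l : b * b * (2 * m + 1) >= PI / 2.
  have : 0 <= b * (2 * m + 1) * (b - c1) by apply Rmult_le_pos; [apply Rmult_le_pos; lra | lra].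
  nra.
rewrite hb in u l.
split.
- apply (Rmult_le_reg_r (2 * m + 1)); first lra.
  rewrite /Rdiv Rmult_assoc Rinv_l; last lra.
  nra.
- nra.
Qed.

Lemma conv : Un_cv (fun n => INR (c (2 ^ n)) / 4 ^ (2 ^ n) * sqrt (PI * INR (2 ^ n))) 1.
Proof.
move=> eps heps.
have [N [hN hN0]] := archimed_cor1 eps heps.
exists N => n hn.
set M := (2 ^ n)%nat.
have hMn : (n < M)%coq_nat by apply Nat.pow_gt_lin_r; lia.
have hM1 : (1 <= M)%coq_nat by lia.
have hMN : INR N <= INR M by apply le_INR; lia.
have hN' : 0 < INR N by apply (lt_INR 0).
have [bl bu] := bounds hM1.
have hP := PI_RGT_0.
have hm : 1 <= INR M by apply (le_INR 1).
have ha := a_ge0 M.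
rewrite -/(a M).
set r := a M * sqrt (PI * INR M).
have hs : 0 <= PI * INR M by nra.
have hr0 : 0 <= r by apply Rmult_le_pos; [exact ha | apply sqrt_pos].
have hr2 : r * r = a M ^ 2 * PI * INR M.
  rewrite /r; have := sqrt_sqrt _ hs; nra.
have hr1 : r <= 1 by nra.
have hl : 2 * INR M / (2 * INR M + 1) = 1 - / (2 * INR M + 1) by field; lra.
rewrite hl in bl.
have h1 : / (2 * INR M + 1) < / INR N.
  apply Rinv_lt_contravar; nra.
rewrite /R_dist Rabs_left1; last lra.
nra.
Qed.
End Closed.


End Wallis.

Import Order.TTheory.

Theorem mainTheorem6 (n : nat) (hn : (1 <= n)%N)
  (disp : Order.disp_t) (B : ctbDistrLatticeType disp)
  (hB : ((\bot : B) != \top)%O) :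
  exists S : {set {set bvec n} * {set bvec n}},
    [/\ (forall A1 A2 : {set bvec n},
           (A1, A2) \in S <-> coord_iso (VS B A1) (VS B A2)),
        #|S| = 'C(2 * 2 ^ n, 2 ^ n),
        #|{: {set bvec n} * {set bvec n}}| = 4 ^ (2 ^ n) &
        Un_cv asym_ratio 1%R].
Proof.
have cardT : #|bvec n| = (2 ^ n)%N.
  by rewrite card_ffun card_bool card_ord expn_pow.
exists [set p : {set bvec n} * {set bvec n} | #|p.1| == #|p.2|].
split.
- move=> A1 A2; rewrite inE /=; split => [/eqP h|h].
  + exact/iso_iff.
  + by apply/eqP; apply/(iso_iff hB).
- by rewrite count_pairs cardT.
- by rewrite card_pairs cardT expn_pow.
- apply: (Wallis.conv (c := fun M => 'C(2 * M, M))).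
  + by rewrite bin0.
  + move=> M /=.
    have h := f_equal INR (binS_id M).
    have im : forall a b, INR (a * b)%N = (INR a * INR b)%R by move=> x y; exact: mult_INR.
    have i2 : INR 2 = 2%R by simpl; ring.
    rewrite !im !S_INR !im i2 in h.
    rewrite h; ring.
Qed.
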